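(* Let $G$ be a simple graph on the node set $[d]$. Then the graph associahedron $\Delta_{\mathcal{B}(G)}$ is inscribed if and only if $G$ is a disjoint union of complete graphs.
   Context: The graphical building set $\mathcal{B}(G)$ consists of all nonempty $I\subseteq[d]$ such that the induced subgraph $G[I]$ is connected. For $I\subseteq[d]$, $\Delta_I=\mathrm{conv}(e_i:i\in I)$ and $\Delta_{\mathcal{B}(G)}=\sum_{I\in\mathcal{B}(G)}\Delta_I$ (Minkowski sum). A polytope is inscribed if all its vertices lie on a common sphere. *)

(* Defs.v *)
From HB Require Import structures.
From mathcomp Require Import all_boot all_order all_algebra.
From mathcomp Require Import reals.
Set Implicit Arguments. Unset Strict Implicit. Unset Printing Implicit Defensive.
Import Order.TTheory GRing.Theory Num.Theory.
Local Open Scope ring_scope.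

Definition simple_graph (d : nat) (e : rel 'I_d) : Prop :=
  symmetric e /\ irreflexive e.

Definition induced (d : nat) (e : rel 'I_d) (I : {set 'I_d}) : rel 'I_d :=
  fun x y => [&& e x y, x \in I & y \in I].

Definition connected_induced (d : nat) (e : rel 'I_d) (I : {set 'I_d}) : bool :=
  (I != set0) && [forall x in I, forall y in I, connect (induced e I) x y].

Definition building_set (d : nat) (e : rel 'I_d) : {set {set 'I_d}} :=
  [set I : {set 'I_d} | connected_induced e I].

Definition std_basis (R : realType) (d : nat) (i : 'I_d) : 'rV[R]_d :=
  delta_mx 0 i.

Definition simplex_face (R : realType) (d : nat) (I : {set 'I_d}) : 'rV[R]_d -> Prop :=
  fun x => exists lam : 'I_d -> R,
    (forall i, i \in I -> 0 <= lam i) /\ \sum_(i in I) lam i = 1 /\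
    x = \sum_(i in I) lam i *: std_basis R i.

Definition minkowski_sum (R : realType) (d : nat) (B : {set {set 'I_d}})
  (P : {set 'I_d} -> 'rV[R]_d -> Prop) : 'rV[R]_d -> Prop :=
  fun x => exists p : {set 'I_d} -> 'rV[R]_d,
    (forall I, I \in B -> P I (p I)) /\ x = \sum_(I in B) p I.

Definition graph_associahedron (R : realType) (d : nat) (e : rel 'I_d) : 'rV[R]_d -> Prop :=
  minkowski_sum (building_set e) (@simplex_face R d).

Definition is_vertex (R : realType) (d : nat) (P : 'rV[R]_d -> Prop) (v : 'rV[R]_d) : Prop :=
  P v /\ forall x y (t : R), P x -> P y -> 0 < t < 1 ->
    v = t *: x + (1 - t) *: y -> x = y.

Definition sqdist (R : realType) (d : nat) (x y : 'rV[R]_d) : R :=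
  \sum_(i < d) (x 0 i - y 0 i) ^+ 2.

Definition inscribed (R : realType) (d : nat) (P : 'rV[R]_d -> Prop) : Prop :=
  exists (c : 'rV[R]_d) (r : R), forall v, is_vertex P v -> sqdist v c = r.

(* G is a disjoint union of complete graphs: each connected component is a clique *)
Definition disjoint_union_of_cliques (d : nat) (e : rel 'I_d) : Prop :=
  forall x y : 'I_d, x != y -> connect e x y -> e x y.

(* Main.v *)
Require Import Defs.
From HB Require Import structures.
From mathcomp Require Import all_boot all_order all_algebra.
From mathcomp Require Import reals.
From mathcomp Require Import ring lra.
Set Implicit Arguments. Unset Strict Implicit. Unset Printing Implicit Defensive.
Import Order.TTheory GRing.Theory Num.Theory.
Local Open Scope ring_scope.

Section Basics.
Variable R : realType.
Variable d : nat.

Lemma sbE (x i : 'I_d) : (std_basis R x) 0 i = (x == i)%:R.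
Proof. by rewrite /std_basis mxE eqxx eq_sym. Qed.

Lemma sum_ind (F : 'I_d -> R) (P : pred 'I_d) j :
  \sum_(i | P i) F i * (i == j)%:R = if P j then F j else 0.
Proof.
rewrite big_mkcond (bigD1 j) //= big1 ?addr0.
  by case: (P j); rewrite ?eqxx ?mulr1.
by move=> i /negbTE ->; rewrite mulr0 if_same.
Qed.

Lemma sum_ind1 (j : 'I_d) : \sum_i (j == i)%:R = 1 :> R.
Proof.
rewrite (bigD1 j) //= eqxx big1 ?addr0 //.
by move=> i; rewrite eq_sym => /negbTE ->.
Qed.

Lemma sf_coord (I : {set 'I_d}) (x : 'rV[R]_d) : simplex_face I x ->
  [/\ forall i, 0 <= x 0 i, forall i, i \notin I -> x 0 i = 0
    & \sum_i x 0 i = 1].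
Proof.
case=> lam [h0 [h1 ->]].
have E : forall j, (\sum_(i in I) lam i *: std_basis R i) 0 j
    = if j \in I then lam j else 0.
  by move=> j; rewrite summxE -(sum_ind lam); apply: eq_bigr => i _; rewrite mxE sbE.
split.
- by move=> i; rewrite E; case: ifP => // /h0.
- by move=> i /negbTE hi; rewrite E hi.
- by rewrite (eq_bigr _ (fun j _ => E j)) -big_mkcond.
Qed.

Lemma sf_of_coord (I : {set 'I_d}) (x : 'rV[R]_d) :
  (forall i, 0 <= x 0 i) -> (forall i, i \notin I -> x 0 i = 0) ->
  \sum_i x 0 i = 1 -> simplex_face I x.
Proof.
move=> h0 h1 h2; exists (fun i => x 0 i); split; first by move=> i _; exact: h0.
split.
  rewrite -h2 [RHS](bigID (fun i => i \in I)) /= [X in _ = _ + X]big1 ?addr0 //.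
apply/rowP => j; rewrite summxE.
rewrite (eq_bigr (fun i => x 0 i * (i == j)%:R)); last first.
  by move=> i _; rewrite mxE sbE.
rewrite sum_ind; case: ifP => // /negbT /h1 ->; done.
Qed.

Lemma sf_basis (I : {set 'I_d}) j : j \in I -> simplex_face I (std_basis R j).
Proof.
move=> jI; apply: sf_of_coord.
- by move=> i; rewrite sbE ler0n.
- by move=> i iI; rewrite sbE; case: eqP => // ej; move: iI; rewrite -ej jI.
- by rewrite (eq_bigr _ (fun i _ => sbE j i)) sum_ind1.
Qed.

End Basics.
Section Vertex.
Variable R : realType.
Variable d : nat.
Variable e : rel 'I_d.
Local Notation B := (building_set e).
Local Notation P := (@graph_associahedron R d e).

Definition W (w : 'I_d -> R) (x : 'rV[R]_d) := \sum_i w i * x 0 i.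

Lemma W_sum w (A : {set {set 'I_d}}) (p : {set 'I_d} -> 'rV[R]_d) :
  W w (\sum_(I in A) p I) = \sum_(I in A) W w (p I).
Proof.
rewrite /W; under eq_bigr do rewrite summxE mulr_sumr.
exact: exchange_big.
Qed.

Lemma W_comb w t x y : W w (t *: x + (1 - t) *: y) = t * W w x + (1-t) * W w y.
Proof. rewrite /W !mulr_sumr -big_split; apply: eq_bigr => i _; rewrite !mxE /=; ring. Qed.

Lemma W_basis w m : W w (std_basis R m) = w m.
Proof. rewrite /W; under eq_bigr do rewrite sbE eq_sym; by rewrite sum_ind. Qed.

Lemma W_face w (I : {set 'I_d}) m z : m \in I ->
  (forall j, j \in I -> j != m -> w j < w m) -> simplex_face I z ->
  W w z <= w m /\ (W w z = w m -> z = std_basis R m).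
Proof.
move=> mI hw /sf_coord [z0 z1 z2].
have E : w m - W w z = \sum_i (w m - w i) * z 0 i.
  rewrite /W -[X in X - _]mulr1 -z2 mulr_sumr -sumrB; apply: eq_bigr => i _; ring.
have Hp : forall i, 0 <= (w m - w i) * z 0 i.
  move=> i; case: (boolP (i \in I)) => iI; last by rewrite z1 ?mulr0.
  apply: mulr_ge0 => //; case: (eqVneq i m) => [->|im]; first by rewrite subrr.
  by rewrite subr_ge0 ltW // hw.
split.
  by rewrite -subr_ge0 E; apply: sumr_ge0 => i _.
move=> hW; have hs : \sum_i (w m - w i) * z 0 i = 0 by rewrite -E hW subrr.
have hz := psumr_eq0P (fun i _ => Hp i) hs.
have zi : forall i, i != m -> z 0 i = 0.
  move=> i im; case: (boolP (i \in I)) => iI; last exact: z1.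
  have := hz i isT; move/eqP; rewrite mulf_eq0 subr_eq0 => /orP[/eqP h|/eqP //].
  by have := hw i iI im; rewrite h ltxx.
have zm : z 0 m = 1.
  by rewrite -z2 (bigD1 m) //= big1 ?addr0 // => i /zi.
apply/rowP => i; rewrite sbE; case: (eqVneq m i) => [<-|mi] //.
by rewrite zi // eq_sym.
Qed.

Lemma vertex_weight (w : 'I_d -> R) (f : {set 'I_d} -> 'I_d) :
  (forall I, I \in B -> f I \in I /\ forall j, j \in I -> j != f I -> w j < w (f I)) ->
  is_vertex P (\sum_(I in B) std_basis R (f I)).
Proof.
move=> hf.
set v := \sum_(I in B) _.
have inP : P v.
  exists (fun I => std_basis R (f I)); split => // I IB.
  by apply: sf_basis; case: (hf I IB).
have Wv : W w v = \sum_(I in B) w (f I).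
  by rewrite W_sum; apply: eq_bigr => I IB; rewrite W_basis.
have key : forall z, P z -> W w z <= W w v /\ (W w z = W w v -> z = v).
  move=> z [p [hp ->]].
  rewrite W_sum Wv.
  have H1 : forall I, I \in B -> W w (p I) <= w (f I) /\
      (W w (p I) = w (f I) -> p I = std_basis R (f I)).
    by move=> I IB; case: (hf I IB) => fI hw; exact: W_face fI hw (hp I IB).
  split; first by apply: ler_sum => I IB; case: (H1 I IB).
  move=> heq.
  have hs : \sum_(I in B) (w (f I) - W w (p I)) = 0 by rewrite sumrB heq subrr.
  have hpos : forall I, I \in B -> 0 <= w (f I) - W w (p I).
    by move=> I IB; rewrite subr_ge0; case: (H1 I IB).
  have hz := psumr_eq0P hpos hs.
  apply: eq_bigr => I IB; apply: (proj2 (H1 I IB)).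
  by apply/eqP; rewrite eq_sym -subr_eq0; apply/eqP; exact: hz.
split => // x y t Px Py /andP[t0 t1] hv.
have := W_comb w t x y; rewrite -hv => hW.
case: (key x Px) => kx1 kx2; case: (key y Py) => ky1 ky2.
have ex : W w x = W w v by nra.
have ey : W w y = W w v by nra.
by rewrite (kx2 ex) (ky2 ey).
Qed.

End Vertex.
Section Exchange.
Variable R : realType.
Variable d : nat.
Variable e : rel 'I_d.
Local Notation B := (building_set e).
Local Notation P := (@graph_associahedron R d e).

Lemma sf_shift (I : {set 'I_d}) q j k (eps : R) :
  simplex_face I q -> j \in I -> k \in I -> j != k -> 0 < eps -> eps <= q 0 j ->
  simplex_face I (q + eps *: (std_basis R k - std_basis R j)).
Proof.
move=> /sf_coord [q0 q1 q2] jI kI jk he hq.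
have E : forall i, (q + eps *: (std_basis R k - std_basis R j)) 0 i
   = q 0 i + eps * ((k == i)%:R - (j == i)%:R).
  by move=> i; rewrite !mxE eqxx /= (eq_sym i k) (eq_sym i j).
apply: sf_of_coord.
- move=> i; rewrite E; case: (eqVneq j i) => [<-|ji].
    by rewrite eq_sym (negbTE jk) sub0r mulrN1 subr_ge0.
  rewrite subr0; apply: addr_ge0 => //; apply: mulr_ge0; [exact: ltW|exact: ler0n].
- move=> i iI; rewrite E q1 //.
  have -> : (k == i) = false by apply/negbTE; apply: contraNneq iI => <-.
  have -> : (j == i) = false by apply/negbTE; apply: contraNneq iI => <-.
  by rewrite subrr mulr0 addr0.
- rewrite (eq_bigr _ (fun i _ => E i)) big_split /= q2 -mulr_sumr sumrB.
  rewrite (eq_bigr _ (fun i _ => erefl ((k == i)%:R : R))) sum_ind1.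
  by rewrite (eq_bigr _ (fun i _ => erefl ((j == i)%:R : R))) sum_ind1 subrr mulr0 addr0.
Qed.

Lemma sum_replace (A : {set {set 'I_d}}) (p : {set 'I_d} -> 'rV[R]_d) I u :
  I \in A ->
  \sum_(I' in A) (if I' == I then p I + u else p I') = \sum_(I' in A) p I' + u.
Proof.
move=> IA; rewrite (bigD1 I) //= eqxx [in RHS](bigD1 I) //= -addrA [u + _]addrC addrA.
congr (_ + _ + _); apply: eq_bigr => I' /andP[_ /negbTE ->] //.
Qed.

Lemma key_exchange (v : 'rV[R]_d) (p : {set 'I_d} -> 'rV[R]_d) :
  is_vertex P v -> (forall I, I \in B -> simplex_face I (p I)) ->
  v = \sum_(I in B) p I ->
  forall I J j k, I \in B -> J \in B -> k \in I -> j \in J ->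
  0 < p I 0 j -> 0 < p J 0 k -> j = k.
Proof.
move=> [_ hv] hp hvs I J j k IB JB kI jJ hj hk.
apply/eqP/negPn/negP => jk.
case: (sf_coord (hp I IB)) => I0 I1 I2.
case: (sf_coord (hp J JB)) => J0 J1 J2.
have jI : j \in I by apply/negPn/negP => /I1 h; rewrite h ltxx in hj.
have kJ : k \in J by apply/negPn/negP => /J1 h; rewrite h ltxx in hk.
set eps := Num.min (p I 0 j) (p J 0 k).
have he : 0 < eps by rewrite lt_min hj hk.
have h1 : eps <= p I 0 j by rewrite ge_min lexx.
have h2 : eps <= p J 0 k by rewrite ge_min lexx orbT.
set x := v + eps *: (std_basis R k - std_basis R j).
set y := v + eps *: (std_basis R j - std_basis R k).
have Px : P x.
  exists (fun I' => if I' == I then p I + eps *: (std_basis R k - std_basis R j) else p I').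
  split; last by rewrite sum_replace // -hvs.
  move=> I' I'B /=; case: eqP => [->|_]; last exact: hp.
  by apply: sf_shift => //; apply: hp.
have Py : P y.
  exists (fun I' => if I' == J then p J + eps *: (std_basis R j - std_basis R k) else p I').
  split; last by rewrite sum_replace // -hvs.
  move=> I' I'B /=; case: eqP => [->|_]; last exact: hp.
  by apply: sf_shift => //; [apply: hp|rewrite eq_sym].
have hxy := hv x y (1/2) Px Py.
have : x = y.
  apply: hxy; first by apply/andP; split; lra.
  by apply/rowP => i; rewrite !mxE /=; field.
move/rowP => /(_ k); rewrite !mxE /= eqxx eq_sym (negbTE jk).
rewrite /= ?mulr1n ?mulr0n => h; have : eps = 0 by lra.
by move=> h0; rewrite h0 ltxx in he.
Qed.

End Exchange.
Lemma sum_indT (R : realType) (T : finType) (F : T -> R) (P : pred T) j :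
  \sum_(i | P i) F i * (i == j)%:R = if P j then F j else 0.
Proof.
rewrite big_mkcond (bigD1 j) //= big1 ?addr0.
  by case: (P j); rewrite ?eqxx ?mulr1.
by move=> i /negbTE ->; rewrite mulr0 if_same.
Qed.

Definition sw (d : nat) (m m' x : 'I_d) := if x == m then m' else if x == m' then m else x.

Lemma swK d (m m' : 'I_d) : involutive (sw m m').
Proof.
move=> x; rewrite /sw.
case: (eqVneq x m) => [->|xm].
  by case: (eqVneq m' m) => [->|m'm]; rewrite ?eqxx.
case: (eqVneq x m') => [->|xm'].
  by rewrite eqxx; case: (eqVneq m m').
by rewrite (negbTE xm) (negbTE xm').
Qed.

Definition Tsw d (m m' : 'I_d) (I : {set 'I_d}) := [set sw m m' x | x in I].

Lemma memT d (m m' : 'I_d) (I : {set 'I_d}) y : (y \in Tsw m m' I) = (sw m m' y \in I).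
Proof. by rewrite /Tsw -{1}(swK m m' y) mem_imset //; exact: can_inj (swK m m'). Qed.

Lemma TT d (m m' : 'I_d) (I : {set 'I_d}) : Tsw m m' (Tsw m m' I) = I.
Proof. by apply/setP => y; rewrite !memT swK. Qed.

Lemma TU d (m m' : 'I_d) (U : {set 'I_d}) : m \in U -> m' \in U -> Tsw m m' U = U.
Proof.
move=> mU m'U; apply/setP => y; rewrite memT /sw.
case: (eqVneq y m) => [->|ym] //; first by rewrite mU m'U.
case: (eqVneq y m') => [->|ym'] //; by rewrite mU m'U.
Qed.

Lemma TsetU d (m m' : 'I_d) (I J : {set 'I_d}) : Tsw m m' (I :|: J) = Tsw m m' I :|: Tsw m m' J.
Proof. exact: imsetU. Qed.

Section Cliques.
Variable R : realType.
Variable d : nat.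
Variable e : rel 'I_d.
Hypothesis hsym : symmetric e.
Hypothesis hirr : irreflexive e.
Hypothesis hcl : disjoint_union_of_cliques e.
Local Notation B := (building_set e).
Local Notation P := (@graph_associahedron R d e).

Lemma inB_conn I x y : I \in B -> x \in I -> y \in I -> connect e x y.
Proof.
rewrite inE /connected_induced => /andP[_ /forall_inP h] xI yI.
have := (forall_inP (h x xI)) y yI.
by apply: connect_sub => u v /andP[huv _]; exact: connect1.
Qed.

Lemma clique_of_B I x y : I \in B -> x \in I -> y \in I -> x != y -> e x y.
Proof. by move=> IB xI yI xy; apply: hcl xy (inB_conn IB xI yI). Qed.

Lemma B_of_clique I : I != set0 ->
  (forall x y, x \in I -> y \in I -> x != y -> e x y) -> I \in B.
Proof.
move=> I0 h; rewrite inE /connected_induced I0 /=.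
apply/forall_inP => x xI; apply/forall_inP => y yI.
case: (eqVneq x y) => [->|xy]; first exact: connect0.
by apply: connect1; rewrite /induced h // xI yI.
Qed.

Lemma B_nonempty I : I \in B -> I != set0.
Proof. by rewrite inE /connected_induced => /andP[]. Qed.

Lemma B_union I J m : I \in B -> J \in B -> m \in I -> m \in J -> I :|: J \in B.
Proof.
move=> IB JB mI mJ; apply: B_of_clique.
  by apply/set0Pn; exists m; rewrite in_setU mI.
have cm : forall x, x \in I :|: J -> connect e x m.
  by move=> x; rewrite in_setU => /orP[xI|xJ];
    [exact: inB_conn IB xI mI | exact: inB_conn JB xJ mJ].
move=> x y xU yU xy; apply: hcl xy _.
apply: connect_trans (cm x xU) _.
by rewrite (sym_connect_sym hsym); exact: cm.
Qed.

Lemma e_conn x y : e x y = (x != y) && connect e x y.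
Proof.
apply/idP/idP.
  move=> h; rewrite connect1 // andbT; apply/eqP => exy.
  by move: h; rewrite exy hirr.
by case/andP => xy; apply: hcl.
Qed.

Lemma sw_e (m m' : 'I_d) x y : connect e m m' -> e (sw m m' x) (sw m m' y) = e x y.
Proof.
move=> cmm.
have cs := sym_connect_sym hsym.
have sc : forall z, connect e (sw m m' z) z.
  move=> z; rewrite /sw; case: (eqVneq z m) => [->|zm]; first by rewrite cs.
  case: (eqVneq z m') => [->|zm'] //; exact: connect0.
rewrite !e_conn (inj_eq (can_inj (swK m m'))); congr (_ && _).
apply/idP/idP => h.
  apply: connect_trans _ (sc y); apply: connect_trans h.
  by rewrite cs; exact: sc.
apply: connect_trans (sc x) _; apply: connect_trans h _.
by rewrite cs; exact: sc.
Qed.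

Lemma TB (m m' : 'I_d) I : connect e m m' -> I \in B -> Tsw m m' I \in B.
Proof.
move=> cmm IB; apply: B_of_clique.
  case/set0Pn: (B_nonempty IB) => x xI; apply/set0Pn; exists (sw m m' x).
  by rewrite memT swK.
move=> x y; rewrite !memT => xI yI xy.
rewrite -(sw_e x y cmm); apply: clique_of_B IB xI yI _.
by rewrite (inj_eq (can_inj (swK m m'))).
Qed.

Lemma TBE (m m' : 'I_d) I : connect e m m' -> (Tsw m m' I \in B) = (I \in B).
Proof.
move=> cmm; apply/idP/idP; last exact: TB.
by move/(TB cmm); rewrite TT.
Qed.

Definition N (U : {set 'I_d}) (m : 'I_d) : R :=
  \sum_(I in B) \sum_(J in B) ((I :|: J == U) && (m \in I) && (m \in J))%:R.

Lemma N_sw U m m' : U \in B -> m \in U -> m' \in U -> N U m = N U m'.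
Proof.
move=> UB mU m'U.
have cmm := inB_conn UB mU m'U.
have injT : injective (Tsw m m') := can_inj (TT m m').
rewrite /N (reindex_inj injT) /=.
rewrite (eq_bigl (fun I => I \in B)); last by move=> I; rewrite TBE.
apply: eq_bigr => I IB.
rewrite (reindex_inj injT) /=.
rewrite (eq_bigl (fun I => I \in B)); last by move=> J; rewrite TBE.
apply: eq_bigr => J JB.
rewrite -TsetU -{1}(TU mU m'U) (inj_eq injT) !memT.
by rewrite /sw eqxx.
Qed.

Lemma eqf_union (f : {set 'I_d} -> 'I_d)
  (hfI : forall I, I \in B -> f I \in I)
  (H : forall I J, I \in B -> J \in B -> f I \in J -> f J \in I -> f I = f J) I J :
  I \in B -> J \in B ->
  (f I == f J) = [&& I :|: J \in B, f (I :|: J) \in I & f (I :|: J) \in J].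
Proof.
move=> IB JB; apply/eqP/and3P.
  move=> hIJ.
  have mI := hfI I IB.
  have mJ : f I \in J by rewrite hIJ; exact: hfI.
  have UB := B_union IB JB mI mJ.
  have fU := hfI _ UB.
  move: (fU); rewrite in_setU => /orP[h|h].
    have fIU : f I \in I :|: J by rewrite in_setU mI.
    have := H _ _ UB IB h fIU.
    by move=> ->; split.
  have fJU : f J \in I :|: J by rewrite in_setU -hIJ mI.
  have := H _ _ UB JB h fJU.
  by move=> ->; split => //; rewrite -hIJ.
case=> UB hI hJ.
have fIU : f I \in I :|: J by rewrite in_setU hfI.
have fJU : f J \in I :|: J by rewrite in_setU hfI ?orbT.
have e1 := H _ _ UB IB hI fIU.
have e2 := H _ _ UB JB hJ fJU.
by rewrite -e1 -e2.
Qed.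

Lemma sq_formula (f : {set 'I_d} -> 'I_d)
  (hfI : forall I, I \in B -> f I \in I)
  (H : forall I J, I \in B -> J \in B -> f I \in J -> f J \in I -> f I = f J) :
  sqdist (\sum_(I in B) std_basis R (f I)) 0 = \sum_(U in B) N U (f U).
Proof.
rewrite /sqdist.
have E : forall i, (\sum_(I in B) std_basis R (f I)) 0 i - (0 : 'rV[R]_d) 0 i
   = \sum_(I in B) (f I == i)%:R.
  by move=> i; rewrite summxE mxE subr0; apply: eq_bigr => I _; rewrite sbE.
under eq_bigr do rewrite E expr2 mulr_suml.
under eq_bigr do under eq_bigr do rewrite mulr_sumr.
rewrite exchange_big /=.
under eq_bigr do rewrite exchange_big /=.
have E2 : forall I J, \sum_i (f I == i)%:R * (f J == i)%:R = (f I == f J)%:R :> R.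
  move=> I J; under eq_bigr do rewrite (eq_sym (f J)).
  by rewrite sum_indT.
under eq_bigr do under eq_bigr do rewrite E2.
rewrite /N [RHS]exchange_big /=.
apply: eq_bigr => I IB.
rewrite [RHS]exchange_big /=.
apply: eq_bigr => J JB.
rewrite (eqf_union hfI H IB JB).
have -> : \sum_(U in B) ((I :|: J == U) && (f U \in I) && (f U \in J))%:R
     = \sum_(U in B) ((f U \in I) && (f U \in J))%:R * (U == I :|: J)%:R :> R.
  apply: eq_bigr => U _; rewrite (eq_sym (I :|: J)).
  by case: (U == I :|: J); rewrite ?andbF ?mulr0 ?mulr1 ?andbT /=.
by rewrite sum_indT; case: (I :|: J \in B).
Qed.

Section Vert.
Variable x0 : 'I_d.

Definition Psi : R := \sum_(U in B) N U (odflt x0 [pick m in U]).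

Lemma vertex_sq v : is_vertex P v -> sqdist v 0 = Psi.
Proof.
move=> hv; case: (hv) => [[p [hp hvs]] _].
have KE := key_exchange hv hp hvs.
pose f I := odflt x0 [pick i | 0 < p I 0 i].
have fprop : forall I, I \in B ->
    [/\ f I \in I, p I = std_basis R (f I) & 0 < p I 0 (f I)].
  move=> I IB; case: (sf_coord (hp I IB)) => I0 I1 I2.
  rewrite /f; case: pickP => [i hi|hn] /=; last first.
    have : \sum_i p I 0 i = 0.
      apply: big1 => i _; apply/eqP; rewrite eq_le I0 andbT.
      by rewrite leNgt hn.
    by rewrite I2 => /eqP; rewrite oner_eq0.
  have iI : i \in I by apply/negPn/negP => /I1 h; rewrite h ltxx in hi.
  have z : forall j, j != i -> p I 0 j = 0.
    move=> j ji; apply/eqP; rewrite eq_le I0 andbT leNgt; apply/negP => hj.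
    have jI : j \in I by apply/negPn/negP => /I1 h; rewrite h ltxx in hj.
    by move: ji; rewrite (KE I I j i IB IB iI jI hj hi) eqxx.
  have o : p I 0 i = 1.
    by rewrite -I2 (bigD1 i) //= big1 ?addr0 // => j /z.
  split => //; apply/rowP => j; rewrite sbE.
  by case: (eqVneq i j) => [<-|ij] //; rewrite z // eq_sym.
have hfI : forall I, I \in B -> f I \in I by move=> I /fprop [].
have H : forall I J, I \in B -> J \in B -> f I \in J -> f J \in I -> f I = f J.
  move=> I J IB JB h1 h2; case: (fprop I IB) => _ _ p1; case: (fprop J JB) => _ _ p2.
  exact: KE I J (f I) (f J) IB JB h2 h1 p1 p2.
have -> : v = \sum_(I in B) std_basis R (f I).
  by rewrite hvs; apply: eq_bigr => I IB; case: (fprop I IB).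
rewrite sq_formula // /Psi; apply: eq_bigr => U UB.
apply: N_sw => //; first exact: hfI.
case: pickP => [m //|hn]; case/set0Pn: (B_nonempty UB) => y yU.
by rewrite hn in yU.
Qed.

End Vert.
End Cliques.

Lemma sum_subsetU1 (R : realType) (T : finType) (x : T) (A : {set T})
  (H : {set T} -> R) : x \notin A ->
  \sum_(I : {set T} | I \subset x |: A) H I
    = \sum_(I : {set T} | I \subset A) H I + \sum_(I : {set T} | I \subset A) H (x |: I).
Proof.
move=> xA; rewrite (bigID (fun I : {set T} => x \in I)) /= addrC; congr (_ + _).
  apply: eq_bigl => I; apply/andP/idP => [[hs hx]|hs].
    apply/subsetP => y yI; have := subsetP hs y yI; rewrite !inE => /orP[/eqP yx|//].
    by move: hx; rewrite -yx yI.
  split; first by apply: subset_trans hs (subsetUr _ _).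
  by apply: contra xA => xI; apply: (subsetP hs).
rewrite (reindex_onto (fun J : {set T} => x |: J) (fun I : {set T} => I :\ x)) /=; last first.
  by move=> I /andP[_ xI]; rewrite setD1K.
apply: eq_bigl => J; apply/idP/idP.
  case/andP => /andP[hs _] /eqP hJ.
  have xJ : x \notin J by rewrite -hJ setD11.
  apply/subsetP => y yJ.
  have : y \in x |: A by apply: (subsetP hs); rewrite !inE yJ orbT.
  rewrite !inE => /orP[/eqP yx|//].
  by move: xJ; rewrite -yx yJ.
move=> hs.
have xJ : x \notin J by apply: contra xA => xJ; apply: (subsetP hs).
rewrite (setUS [set x] hs) setU11 (setU1K xJ) eqxx //.
Qed.

Lemma sum_subset1 (R : realType) (T : finType) (x : T) (H : {set T} -> R) :
  \sum_(I : {set T} | I \subset [set x]) H I = H set0 + H [set x].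
Proof.
rewrite (eq_bigl (fun I : {set T} => (I == [set x]) || (I == set0))); last by move=> I; rewrite subset1.
rewrite (bigD1 [set x]) /=; last by rewrite eqxx.
rewrite addrC (eq_bigl (fun I : {set T} => I == set0)); first by rewrite big_pred1_eq.
move=> I; case: (eqVneq I set0) => [->|_]; last by rewrite orbF andbN.
rewrite orbT /=; apply/negP => /eqP/setP/(_ x).
by rewrite !inE eqxx.
Qed.

Lemma cliques_of_triples d (e : rel 'I_d) :
  (forall a b c, e a b -> e b c -> a != c -> e a c) -> disjoint_union_of_cliques e.
Proof.
move=> htr x y xy /connectP [p pth ey]; subst y.
elim: p x pth xy => [|z p IH] x /=; first by rewrite eqxx.
case/andP => exz pz xl.
case: (eqVneq z (last z p)) => [<-|zl] //.
exact: htr exz (IH z pz zl) xl.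
Qed.

Section Triple.
Variable R : realType.
Variable d : nat.
Variable e : rel 'I_d.
Hypothesis hsym : symmetric e.
Hypothesis hirr : irreflexive e.
Variables a b c : 'I_d.
Hypothesis eab : e a b.
Hypothesis ebc : e b c.
Hypothesis nac : ~~ e a c.
Hypothesis ac : a != c.
Local Notation B := (building_set e).
Local Notation P := (@graph_associahedron R d e).
Implicit Types (I : {set 'I_d}) (w : 'I_d -> R).

Lemma ab : a != b.
Proof. by apply/eqP => h; move: eab; rewrite h hirr. Qed.
Lemma bc : b != c.
Proof. by apply/eqP => h; move: ebc; rewrite h hirr. Qed.

Definition T : {set 'I_d} := a |: (b |: [set c]).

Definition wgt (x1 x2 x3 : 'I_d) (i : 'I_d) : R :=
  if i == x1 then 2 else if i == x2 then 1 else if i == x3 then 0 else 3 + (i : nat)%:R.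

Definition amax (w : 'I_d -> R) (I : {set 'I_d}) : 'I_d :=
  Order.arg_max (odflt a [pick i in I]) (fun i => i \in I) w.

Lemma amax_spec w I : I != set0 ->
  amax w I \in I /\ forall j, j \in I -> w j <= w (amax w I).
Proof.
case/set0Pn => y yI; rewrite /amax; case: pickP => [i0 hi0|hn] /=; last first.
  by move: (hn y); rewrite yI.
case: (arg_maxP w hi0) => m mI hm; split => // j jI; exact: hm.
Qed.

Lemma amax_eq w I x : x \in I -> (forall j, j \in I -> j != x -> w j < w x) ->
  amax w I = x.
Proof.
move=> xI hx.
have I0 : I != set0 by apply/set0Pn; exists x.
case: (amax_spec w I0) => mI hm.
apply/eqP/negPn/negP => mx.
by have := hm x xI; rewrite leNgt hx.
Qed.

Lemma amax1 w x : amax w [set x] = x.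
Proof. by apply: amax_eq => [|j]; rewrite ?inE // => ->. Qed.

Lemma wgt_inj x1 x2 x3 : injective (wgt x1 x2 x3).
Proof.
move=> i j; rewrite /wgt.
have hi : 0 <= (i : nat)%:R :> R := ler0n _ _.
have hj : 0 <= (j : nat)%:R :> R := ler0n _ _.
do ![case: eqP => [->|?]] => //; try (by move=> h; exfalso; lra).
by move/addrI/eqP; rewrite eqr_nat => /eqP/val_inj.
Qed.

Definition covT (x1 x2 x3 : 'I_d) := forall t, (t \in T) = [|| t == x1, t == x2 | t == x3].

Lemma wgt_in x1 x2 x3 t : covT x1 x2 x3 -> t \in T -> wgt x1 x2 x3 t <= 2.
Proof.
move=> hc; rewrite hc /wgt.
by do ![case: eqP => ?] => //= _; lra.
Qed.

Lemma wgt_out x1 x2 x3 t : covT x1 x2 x3 -> t \notin T -> wgt x1 x2 x3 t = 3 + (t : nat)%:R.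
Proof.
move=> hc; rewrite hc /wgt.
by do ![case: eqP => ?] => //=.
Qed.

Lemma amax_out x1 x2 x3 I j : covT x1 x2 x3 -> j \in I -> j \notin T ->
  amax (wgt x1 x2 x3) I \notin T.
Proof.
move=> hc jI jT.
have I0 : I != set0 by apply/set0Pn; exists j.
case: (amax_spec (wgt x1 x2 x3) I0) => mI hm.
apply/negP => mT.
have h1 := wgt_in hc mT; have h2 := hm j jI; rewrite (wgt_out hc jT) in h2.
have : 0 <= (j : nat)%:R :> R := ler0n _ _.
lra.
Qed.

Lemma amax_agree x1 x2 x3 y1 y2 y3 I j : covT x1 x2 x3 -> covT y1 y2 y3 ->
  j \in I -> j \notin T -> amax (wgt x1 x2 x3) I = amax (wgt y1 y2 y3) I.
Proof.
move=> hx hy jI jT.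
have I0 : I != set0 by apply/set0Pn; exists j.
have m1T := amax_out hx jI jT; have m2T := amax_out hy jI jT.
case: (amax_spec (wgt x1 x2 x3) I0) => m1I h1.
case: (amax_spec (wgt y1 y2 y3) I0) => m2I h2.
have := h1 _ m2I; have := h2 _ m1I.
rewrite !(wgt_out hx) ?(wgt_out hy) // => l1 l2.
apply: (@wgt_inj x1 x2 x3); rewrite !(wgt_out hx) //.
lra.
Qed.


Lemma B_star I h : h \in I -> (forall x, x \in I -> (x == h) || e h x) -> I \in B.
Proof.
move=> hI hx; rewrite inE /connected_induced.
have I0 : I != set0 by apply/set0Pn; exists h.
rewrite I0 /=.
have ch : forall x, x \in I -> connect (induced e I) x h.
  move=> x xI; case/orP: (hx x xI) => [/eqP ->|ehx]; first exact: connect0.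
  by apply: connect1; rewrite /induced hsym ehx xI hI.
have hc : forall x, x \in I -> connect (induced e I) h x.
  move=> x xI; case/orP: (hx x xI) => [/eqP ->|ehx]; first exact: connect0.
  by apply: connect1; rewrite /induced ehx xI hI.
apply/forall_inP => x xI; apply/forall_inP => y yI.
exact: connect_trans (ch x xI) (hc y yI).
Qed.

Lemma B1 x : [set x] \in B.
Proof. apply: (@B_star [set x] x); first by rewrite inE. by move=> y; rewrite inE => ->. Qed.

Lemma Bab : a |: [set b] \in B.
Proof.
apply: (@B_star (a |: [set b]) b); first by rewrite !inE eqxx orbT.
by move=> x; rewrite !inE => /orP[/eqP ->|->] //; rewrite hsym eab orbT.
Qed.

Lemma Bbc : b |: [set c] \in B.
Proof.
apply: (@B_star (b |: [set c]) b); first by rewrite !inE eqxx.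
by move=> x; rewrite !inE => /orP[->|/eqP ->] //; rewrite ebc orbT.
Qed.

Lemma BT : T \in B.
Proof.
apply: (@B_star T b); first by rewrite !inE eqxx orbT.
move=> x; rewrite !inE => /or3P[/eqP ->|->|/eqP ->] //.
  by rewrite hsym eab orbT.
by rewrite ebc orbT.
Qed.

Lemma B0 : (set0 \in B) = false.
Proof. by rewrite inE /connected_induced eqxx. Qed.

Lemma Bac : (a |: [set c] \in B) = false.
Proof.
apply/negP; rewrite inE /connected_induced => /andP[_ /forall_inP h].
have aI : a \in a |: [set c] by rewrite !inE eqxx.
have cI : c \in a |: [set c] by rewrite !inE eqxx orbT.
have := forall_inP (h a aI) c cI.
case/connectP => [[|z p]] /=.
  by move=> _ ca; move: ac; rewrite -ca eqxx.
case/andP => /andP[eaz /andP[_ zI]] _ _.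
move: zI; rewrite !inE => /orP[/eqP ez|/eqP ez]; move: eaz; rewrite ez.
  by rewrite hirr.
by rewrite (negbTE nac).
Qed.

Lemma sumBT (G : {set 'I_d} -> R) :
  \sum_(I in B | I \subset T) G I =
  G [set a] + G [set b] + G [set c] + G (a |: [set b]) + G (b |: [set c]) + G T.
Proof.
rewrite (eq_bigl (fun I => (I \subset T) && (I \in B))); last by move=> I; rewrite andbC.
rewrite big_mkcondr /T.
have anA : a \notin b |: [set c] by rewrite !inE negb_or ab.
have bnc : b \notin [set c] by rewrite !inE bc.
rewrite (sum_subsetU1 _ anA) !(sum_subsetU1 _ bnc) !sum_subset1 !setU0.
rewrite B0 Bac !B1 Bab Bbc.
have -> : (a |: (b |: [set c])) \in B by exact: BT.
rewrite /=; ring.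
Qed.


Definition vv x1 x2 x3 : 'rV[R]_d := \sum_(I in B) std_basis R (amax (wgt x1 x2 x3) I).
Definition KK : 'rV[R]_d := \sum_(I in B | ~~ (I \subset T)) std_basis R (amax (wgt a b c) I).

Lemma covabc : covT a b c.
Proof. by move=> t; rewrite !inE. Qed.

Lemma vertex_vv x1 x2 x3 : is_vertex P (vv x1 x2 x3).
Proof.
apply: (@vertex_weight R d e (wgt x1 x2 x3)) => I IB.
have I0 : I != set0 by move: IB; rewrite inE /connected_induced => /andP[].
case: (amax_spec (wgt x1 x2 x3) I0) => mI hm; split => // j jI jm.
rewrite lt_neqAle hm // andbT; apply: contra jm => /eqP h; apply/eqP; exact: wgt_inj h.
Qed.

Lemma vcoord x1 x2 x3 i : covT x1 x2 x3 -> vv x1 x2 x3 0 i = KK 0 i +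
  ((a == i)%:R + (b == i)%:R + (c == i)%:R + (amax (wgt x1 x2 x3) (a |: [set b]) == i)%:R
   + (amax (wgt x1 x2 x3) (b |: [set c]) == i)%:R + (amax (wgt x1 x2 x3) T == i)%:R).
Proof.
move=> hc; rewrite /vv /KK !summxE (bigID (fun I => I \subset T)) /= addrC.
congr (_ + _).
  apply: eq_bigr => I /andP[_ nT]; case/subsetPn: nT => j jI jT.
  by rewrite (amax_agree hc covabc jI jT).
rewrite (eq_bigr (fun I => (amax (wgt x1 x2 x3) I == i)%:R)); last by move=> I _; rewrite sbE.
by rewrite sumBT !amax1.
Qed.

Lemma sq3 (v K z : 'rV[R]_d) (al be ga : R) :
  v 0 a = K 0 a + al -> v 0 b = K 0 b + be -> v 0 c = K 0 c + ga ->
  (forall i, i != a -> i != b -> i != c -> v 0 i = K 0 i) ->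
  sqdist v z = sqdist K z + (2 * al * (K 0 a - z 0 a) + al ^+ 2)
     + (2 * be * (K 0 b - z 0 b) + be ^+ 2) + (2 * ga * (K 0 c - z 0 c) + ga ^+ 2).
Proof.
move=> va vb vc vo.
pose D i := (v 0 i - z 0 i) ^+ 2 - (K 0 i - z 0 i) ^+ 2.
have -> : sqdist v z = sqdist K z + \sum_i D i.
  rewrite /sqdist -big_split /=; apply: eq_bigr => i _; rewrite /D /=; ring.
have hD : forall i, i != a -> i != b -> i != c -> D i = 0.
  by move=> i ia ib ic; rewrite /D vo // subrr.
rewrite (bigD1 a) //= (bigD1 b) /=; last by rewrite eq_sym ab.
rewrite (bigD1 c) /=; last by rewrite (eq_sym c a) ac (eq_sym c b) bc.
rewrite big1; last by move=> i /andP[/andP[ia ib] ic]; rewrite hD.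
rewrite /D va vb vc; ring.
Qed.

Definition nn (mab mbc mT t : 'I_d) : R :=
  1 + (mab == t)%:R + (mbc == t)%:R + (mT == t)%:R.

Lemma memT_neq m i : m \in T -> i != a -> i != b -> i != c -> (m == i) = false.
Proof.
rewrite !inE => /or3P[] /eqP -> ia ib ic; apply/negbTE; by rewrite eq_sym.
Qed.

Lemma sq_perm x1 x2 x3 mab mbc mT z : covT x1 x2 x3 ->
  amax (wgt x1 x2 x3) (a |: [set b]) = mab ->
  amax (wgt x1 x2 x3) (b |: [set c]) = mbc ->
  amax (wgt x1 x2 x3) T = mT ->
  sqdist (vv x1 x2 x3) z = sqdist KK z
   + (2 * nn mab mbc mT a * (KK 0 a - z 0 a) + nn mab mbc mT a ^+ 2)
   + (2 * nn mab mbc mT b * (KK 0 b - z 0 b) + nn mab mbc mT b ^+ 2)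
   + (2 * nn mab mbc mT c * (KK 0 c - z 0 c) + nn mab mbc mT c ^+ 2).
Proof.
move=> hc h1 h2 h3.
have ba : (b == a) = false by apply/negbTE; rewrite eq_sym ab.
have ca : (c == a) = false by apply/negbTE; rewrite eq_sym ac.
have cb : (c == b) = false by apply/negbTE; rewrite eq_sym bc.
have ab' : (a == b) = false by apply/negbTE; exact: ab.
have ac' : (a == c) = false by apply/negbTE; exact: ac.
have bc' : (b == c) = false by apply/negbTE; exact: bc.
apply: sq3.
- by rewrite vcoord // h1 h2 h3 eqxx ba ca /nn /=; ring.
- by rewrite vcoord // h1 h2 h3 eqxx ab' cb /nn /=; ring.
- by rewrite vcoord // h1 h2 h3 eqxx ac' bc' /nn /=; ring.
move=> i ia ib ic; rewrite vcoord //.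
have n1 : a |: [set b] != set0 by apply/set0Pn; exists a; rewrite !inE eqxx.
have n2 : b |: [set c] != set0 by apply/set0Pn; exists b; rewrite !inE eqxx.
have n3 : T != set0 by apply/set0Pn; exists a; rewrite !inE eqxx.
have m1 : mab \in T.
  rewrite -h1; case: (amax_spec (wgt x1 x2 x3) n1) => + _.
  by rewrite !inE => /orP[->|->]; rewrite ?orbT.
have m2 : mbc \in T.
  rewrite -h2; case: (amax_spec (wgt x1 x2 x3) n2) => + _.
  by rewrite !inE => /orP[->|->]; rewrite ?orbT.
have m3 : mT \in T by rewrite -h3; case: (amax_spec (wgt x1 x2 x3) n3).
have aT : a \in T by rewrite !inE eqxx.
have bT : b \in T by rewrite !inE eqxx orbT.
have cT : c \in T by rewrite !inE eqxx !orbT.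
rewrite h1 h2 h3 !(memT_neq _ ia ib ic) //=.
by rewrite !addr0.
Qed.

End Triple.

Ltac fin ba ca cb ab ac bc :=
  rewrite ?eqxx //= => _; rewrite /wgt ?eqxx ?ba ?ca ?cb ?ab ?ac ?bc /=; lra.
Ltac amx ba ca cb ab ac bc :=
  apply: amax_eq; [by rewrite !inE ?eqxx ?orbT |
  move=> j; rewrite !inE => /orP[/eqP->|/eqP->]; fin ba ca cb ab ac bc].
Ltac amx3 ba ca cb ab ac bc :=
  apply: amax_eq; [by rewrite !inE ?eqxx ?orbT |
  move=> j; rewrite !inE => /orP[/eqP->|/orP[/eqP->|/eqP->]]; fin ba ca cb ab ac bc].

Lemma not_inscribed (R : realType) d (e : rel 'I_d) (hsym : symmetric e)
  (hirr : irreflexive e) a b c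
  (eab : e a b) (ebc : e b c) (nac : ~~ e a c) (ac : a != c) :
  ~ inscribed (@graph_associahedron R d e).
Proof.
case=> z [r hr].
have ab : a != b by apply/eqP => h; move: eab; rewrite h hirr.
have bc : b != c by apply/eqP => h; move: ebc; rewrite h hirr.
have ba' : (b == a) = false by apply/negbTE; rewrite eq_sym ab.
have ca' : (c == a) = false by apply/negbTE; rewrite eq_sym ac.
have cb' : (c == b) = false by apply/negbTE; rewrite eq_sym bc.
have ab' : (a == b) = false by apply/negbTE; exact: ab.
have ac' : (a == c) = false by apply/negbTE; exact: ac.
have bc' : (b == c) = false by apply/negbTE; exact: bc.
have cov1 : covT a b c a b c by move=> t; rewrite !inE.
have cov2 : covT a b c a c b.
  by move=> t; rewrite !inE; case: (t == a); case: (t == b); case: (t == c).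
have cov3 : covT a b c c b a.
  by move=> t; rewrite !inE; case: (t == a); case: (t == b); case: (t == c).
have cov4 : covT a b c b a c.
  by move=> t; rewrite !inE; case: (t == a); case: (t == b); case: (t == c).
have A11 : amax a (wgt R a b c) (a |: [set b]) = a by amx ba' ca' cb' ab' ac' bc'.
have A12 : amax a (wgt R a b c) (b |: [set c]) = b by amx ba' ca' cb' ab' ac' bc'.
have A13 : amax a (wgt R a b c) (T a b c) = a by rewrite /T; amx3 ba' ca' cb' ab' ac' bc'.
have A21 : amax a (wgt R a c b) (a |: [set b]) = a by amx ba' ca' cb' ab' ac' bc'.
have A22 : amax a (wgt R a c b) (b |: [set c]) = c by amx ba' ca' cb' ab' ac' bc'.
have A23 : amax a (wgt R a c b) (T a b c) = a by rewrite /T; amx3 ba' ca' cb' ab' ac' bc'.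
have A31 : amax a (wgt R c b a) (a |: [set b]) = b by amx ba' ca' cb' ab' ac' bc'.
have A32 : amax a (wgt R c b a) (b |: [set c]) = c by amx ba' ca' cb' ab' ac' bc'.
have A33 : amax a (wgt R c b a) (T a b c) = c by rewrite /T; amx3 ba' ca' cb' ab' ac' bc'.
have A41 : amax a (wgt R b a c) (a |: [set b]) = b by amx ba' ca' cb' ab' ac' bc'.
have A42 : amax a (wgt R b a c) (b |: [set c]) = b by amx ba' ca' cb' ab' ac' bc'.
have A43 : amax a (wgt R b a c) (T a b c) = b by rewrite /T; amx3 ba' ca' cb' ab' ac' bc'.
have E1 := sq_perm hsym hirr eab ebc nac ac z cov1 A11 A12 A13.
have E2 := sq_perm hsym hirr eab ebc nac ac z cov2 A21 A22 A23.
have E3 := sq_perm hsym hirr eab ebc nac ac z cov3 A31 A32 A33.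
have E4 := sq_perm hsym hirr eab ebc nac ac z cov4 A41 A42 A43.
rewrite (hr _ (vertex_vv R e a a b c)) in E1.
rewrite (hr _ (vertex_vv R e a a c b)) in E2.
rewrite (hr _ (vertex_vv R e a c b a)) in E3.
rewrite (hr _ (vertex_vv R e a b a c)) in E4.
move: E1 E2 E3 E4; rewrite /nn !eqxx ba' ca' cb' ab' ac' bc' /=.
set S := sqdist _ _.
set ya := KK _ _ _ _ _ 0 a - z 0 a.
set yb := KK _ _ _ _ _ 0 b - z 0 b.
set yc := KK _ _ _ _ _ 0 c - z 0 c.
move=> E1 E2 E3 E4; clearbody S ya yb yc; clear -E1 E2 E3 E4.
lra.
Qed.

Theorem corollary4p21 (R : realType) (d : nat) (e : rel 'I_d) :
  simple_graph e ->
  (inscribed (@graph_associahedron R d e) <-> disjoint_union_of_cliques e).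
Proof.
case=> hsym hirr; split.
- move=> hins.
  case: (boolP [forall a, forall b, forall c, (e a b && e b c && (a != c)) ==> e a c]) => H.
    apply: cliques_of_triples => a b c eab ebc ac.
    by move/forallP/(_ a)/forallP/(_ b)/forallP/(_ c): H; rewrite eab ebc ac.
  exfalso.
  case/forallPn: H => a /forallPn [b /forallPn [c]].
  rewrite negb_imply => /andP[/andP[/andP[eab ebc] ac] nac].
  exact: (not_inscribed hsym hirr eab ebc nac ac hins).
- move=> hcl.
  case: d e hsym hirr hcl => [|n] e hsym hirr hcl.
    by exists 0, 0 => v _; rewrite /sqdist big_ord0.
  by exists 0, (Psi R e ord0) => v hv; exact: vertex_sq hsym hirr hcl ord0 v hv.
Qed.
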